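(* Let $n\ge 1$, let $x_0,\dots,x_n\in C[0,1]$ be real-valued with $x_k(\xi)\neq x_{k-1}(\xi)$ for all $\xi\in[0,1]$ and $k=1,\dots,n$. Let $F:Q[0,1]\to\mathbb{R}$ be $(n-1)$-times Gâteaux differentiable. Let $a_0\in\mathbb{R}$ and let $a_1,\dots,a_n\in C[0,1]$. Suppose that for every $\xi\in[0,1]$ and every $i\in\{0,1,\dots,n\}$ the continued fraction $Q_n(x^i(\cdot,\xi),\xi)$ is well defined and the interpolation conditions $$Q_n(x^i(\cdot,\xi),\xi)=F(x^i(\cdot,\xi)),\qquad i=0,1,\dots,n,\ \ \xi\in[0,1],$$ hold. Then: (i) $a_0=F(x_0)$; (ii) the function $\xi\mapsto F(x^1(\cdot,\xi))$ is differentiable on $[0,1]$ (one-sidedly at the endpoints) and $$a_1(\xi)=\frac{-1}{x_1(\xi)-x_0(\xi)}\,\frac{d}{d\xi}F(x^1(\cdot,\xi)),\qquad \xi\in[0,1];$$ (iii) for each $k\in\{2,\dots,n\}$ and each relatively open subset $J\subseteq[0,1]$ on which $G_k(\xi)$ is well defined, $G_k$ is differentiable on $J$ and $$a_k(\xi)=\frac{-1}{x_k(\xi)-x_{k-1}(\xi)}\,\frac{d}{d\xi}G_k(\xi),\qquad \xi\in J .$$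
   Context: Continued fraction notation: for quantities $b_0,c_1,b_1,\dots,c_m,b_m$, the finite continued fraction $b_0+\frac{c_1}{b_1}+\frac{c_2}{b_2}+\dots+\frac{c_m}{b_m}$ means $b_0+\cfrac{c_1}{b_1+\cfrac{c_2}{b_2+\dots+\cfrac{c_m}{b_m}}}$; it is called well defined if, when it is evaluated from the innermost level outward, every denominator encountered is nonzero. $Q[0,1]$ denotes the space of real-valued piecewise continuous functions on $[0,1]$. $H$ is the Heaviside function, $H(t)=1$ for $t\ge 0$, $H(t)=0$ for $t<0$. Given $x_0,\dots,x_n\in C[0,1]$, the continual nodes are $x^0(z,\xi):=x_0(z)$ and $x^i(z,\xi):=x_0(z)+H(z-\xi)\,(x_i(z)-x_0(z))$ for $i=1,\dots,n$, $z,\xi\in[0,1]$; for fixed $\xi$, $x^i(\cdot,\xi)\in Q[0,1]$. Integral continued C-fraction: given a number $a_0$ and kernels $a_1,\dots,a_n:[0,1]\to\mathbb{R}$, for $x\in Q[0,1]$ and $\xi\in[0,1]$ put $A_j(x,\xi):=\int_0^1 a_j(z)\,[x(z)-x^{j-1}(z,\xi)]\,dz$ ($j=1,\dots,n$) and $$Q_n(x(\cdot),\xi):=a_0+\frac{A_1(x,\xi)}{1}+\frac{A_2(x,\xi)}{1}+\dots+\frac{A_n(x,\xi)}{1}.$$ For $k\in\{2,\dots,n\}$, $j\in\{1,\dots,k-1\}$ and $\xi\in[0,1]$ put $A^{(k)}_j(\xi):=\int_0^1 a_j(z)\,[x^k(z,\xi)-x^{j-1}(z,\xi)]\,dz$ and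 $$G_k(\xi):=\cfrac{A^{(k)}_{k-1}(\xi)}{-1+\cfrac{A^{(k)}_{k-2}(\xi)}{-1+\dots+\cfrac{A^{(k)}_{2}(\xi)}{-1+\cfrac{A^{(k)}_{1}(\xi)}{F(x^k(\cdot,\xi))-F(x_0)}}}},$$ so that $G_2(\xi)=A^{(2)}_1(\xi)/\big(F(x^2(\cdot,\xi))-F(x_0)\big)$ and $G_3(\xi)=A^{(3)}_2(\xi)/\big(-1+A^{(3)}_1(\xi)/(F(x^3(\cdot,\xi))-F(x_0))\big)$. *)

(* Defs.v *)
From Stdlib Require Import Reals Lra Lia Arith List ClassicalEpsilon.
Import ListNotations.
Open Scope R_scope.

Definition cont01 (f : R -> R) : Prop :=
  forall z, 0 <= z <= 1 -> forall eps, 0 < eps ->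
    exists delta, 0 < delta /\
      forall y, 0 <= y <= 1 -> Rabs (y - z) < delta -> Rabs (f y - f z) < eps.

(* Piecewise continuity on [0,1] (f ∈ Q[0,1]): a finite partition
   0 = t_0 < ... < t_m = 1 such that on each open piece f agrees with a
   function continuous on the closed piece (finite one-sided limits). *)
Definition PC01 (f : R -> R) : Prop :=
  exists (m : nat) (t : nat -> R),
    t 0%nat = 0 /\ t m = 1 /\
    (forall i, (i < m)%nat -> t i < t (S i)) /\
    (forall i, (i < m)%nat -> exists g : R -> R,
        (forall z, t i <= z <= t (S i) -> continuity_pt g z) /\
        (forall z, t i < z < t (S i) -> f z = g z)).

Fixpoint gateaux_diff (k : nat) (F : (R -> R) -> R) : Prop :=
  match k with
  | O => True
  | S k' => forall h, PC01 h ->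
      exists dF : (R -> R) -> R,
        (forall x, PC01 x ->
           derivable_pt_lim (fun t => F (fun z => x z + t * h z)) 0 (dF x)) /\
        gateaux_diff k' dF
  end.

(* Riemann integral over [a,b]: the common value of RiemannInt pr over
   integrability proofs pr (unspecified if f is not Riemann integrable; all
   integrands used below are Riemann integrable). *)
Definition Rint (f : R -> R) (a b : R) : R :=
  epsilon (inhabits 0)
    (fun v => exists pr : Riemann_integrable f a b, RiemannInt pr = v).

Definition Heav (t : R) : R := if Rle_dec 0 t then 1 else 0.

Definition node (xs : nat -> R -> R) (i : nat) (xi : R) : R -> R :=
  match i with
  | O => xs O
  | S _ => fun z => xs O z + Heav (z - xi) * (xs i z - xs O z)
  end.

(* Finite continued fraction c1/(b1 + c2/(b2 + ... + cm/bm)), given as the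
   list [(c1,b1);...;(cm,bm)], evaluated from the innermost level outward;
   None if some denominator encountered is zero (not well defined). *)
Fixpoint cf_tail (l : list (R * R)) : option R :=
  match l with
  | [] => Some 0
  | (c, b) :: l' =>
      match cf_tail l' with
      | None => None
      | Some v => if Req_EM_T (b + v) 0 then None else Some (c / (b + v))
      end
  end.

Definition cfrac (b0 : R) (l : list (R * R)) : option R :=
  match cf_tail l with Some v => Some (b0 + v) | None => None end.

Definition Acoef (a : nat -> R -> R) (xs : nat -> R -> R) (j : nat)
    (x : R -> R) (xi : R) : R :=
  Rint (fun z => a j z * (x z - node xs (j - 1) xi z)) 0 1.

Definition Qn (n : nat) (a0 : R) (a : nat -> R -> R) (xs : nat -> R -> R)
    (x : R -> R) (xi : R) : option R :=
  cfrac a0 (map (fun j => (Acoef a xs j x xi, 1)) (seq 1 n)).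

(* G_k(xi) as a (partial) continued fraction:
   A^{(k)}_{k-1}/(-1 + A^{(k)}_{k-2}/(-1 + ... + A^{(k)}_1/(F(x^k)-F(x_0)))). *)
Definition Gk_cf (F : (R -> R) -> R) (a : nat -> R -> R) (xs : nat -> R -> R)
    (k : nat) (xi : R) : option R :=
  cf_tail (map (fun j => (Acoef a xs j (node xs k xi) xi,
                          if Nat.eqb j 1 then F (node xs k xi) - F (xs O) else -1))
               (rev (seq 1 (k - 1)))).

(* G_k as a real function (value 0 where not well defined). *)
Definition Gk (F : (R -> R) -> R) (a : nat -> R -> R) (xs : nat -> R -> R)
    (k : nat) (xi : R) : R :=
  match Gk_cf F a xs k xi with Some v => v | None => 0 end.

(* f has derivative l at xi relative to the set D (one-sided at boundary
   points of an interval). *)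
Definition has_deriv_within (D : R -> Prop) (f : R -> R) (xi l : R) : Prop :=
  forall eps, 0 < eps -> exists delta, 0 < delta /\
    forall h, h <> 0 -> Rabs h < delta -> D (xi + h) ->
      Rabs ((f (xi + h) - f xi) / h - l) < eps.

Definition I01 (z : R) : Prop := 0 <= z <= 1.

Definition rel_open01 (J : R -> Prop) : Prop :=
  (forall z, J z -> I01 z) /\
  (forall z, J z -> exists delta, 0 < delta /\
      forall y, I01 y -> Rabs (y - z) < delta -> J y).

(* Main.v *)
Require Import Defs.
From Stdlib Require Import Reals Lra Lia Arith List ClassicalEpsilon.
From Coquelicot Require Import Coquelicot.
Import ListNotations.
Open Scope R_scope.

Definition clamp (z : R) : R := Rmax 0 (Rmin 1 z).

Lemma clamp_I01 z : I01 (clamp z).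
Proof. unfold clamp, I01, Rmax, Rmin; repeat destruct Rle_dec; lra. Qed.

Lemma clamp_id z : I01 z -> clamp z = z.
Proof. unfold clamp, I01, Rmax, Rmin; intros; repeat destruct Rle_dec; lra. Qed.

Lemma clamp_lip y z : Rabs (clamp y - clamp z) <= Rabs (y - z).
Proof. unfold clamp, Rmax, Rmin; repeat destruct Rle_dec; unfold Rabs;
  repeat destruct Rcase_abs; lra. Qed.

Lemma cont_clamp f z : cont01 f -> continuity_pt (fun y => f (clamp y)) z.
Proof.
  intros Hf. unfold continuity_pt, continue_in, limit1_in, limit_in; simpl; unfold R_dist.
  intros eps Heps. destruct (Hf (clamp z) (clamp_I01 z) eps Heps) as [d [Hd H]].
  exists d; split; [lra|]. intros y [_ Hy].
  apply H. apply clamp_I01. eapply Rle_lt_trans. apply clamp_lip. lra.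
Qed.

Lemma Rint_RInt f a b : ex_RInt f a b -> Rint f a b = RInt f a b.
Proof.
  intros H. unfold Rint.
  destruct (epsilon_spec (inhabits 0)
    (fun v => exists pr : Riemann_integrable f a b, RiemannInt pr = v)) as [pr Hpr].
  exists (RiemannInt (ex_RInt_Reals_0 f a b H)). now exists (ex_RInt_Reals_0 f a b H).
  rewrite <- Hpr. symmetry. apply RInt_Reals.
Qed.

Lemma node_lt xs i xi z : z < xi -> node xs i xi z = xs O z.
Proof. intros. destruct i; simpl; auto. unfold Heav; destruct Rle_dec; lra. Qed.

Lemma node_ge xs i xi z : xi <= z -> node xs i xi z = xs i z.
Proof. intros. destruct i; simpl; auto. unfold Heav; destruct Rle_dec; lra. Qed.

Lemma Acoef_zero a xs j i xi : (j - 1 = i)%nat -> Acoef a xs j (node xs i xi) xi = 0.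
Proof.
  intros H. unfold Acoef. rewrite H.
  assert (E : forall z, Rmin 0 1 < z < Rmax 0 1 -> (fun _ : R => 0) z =
     (fun z => a j z * (node xs i xi z - node xs i xi z)) z) by (intros; simpl; ring).
  rewrite Rint_RInt. rewrite <- (RInt_ext _ _ _ _ E). rewrite RInt_const. unfold scal; simpl; unfold mult; simpl; ring.
  eapply ex_RInt_ext. exact E. apply ex_RInt_const.
Qed.

Definition gfun (a : nat -> R -> R) (xs : nat -> R -> R) j k z :=
  a j (clamp z) * (xs k (clamp z) - xs (j - 1)%nat (clamp z)).

Lemma gfun_cont a xs j k z : cont01 (a j) -> cont01 (xs k) -> cont01 (xs (j-1)%nat) ->
  continuity_pt (gfun a xs j k) z.
Proof.
  intros. unfold gfun. apply continuity_pt_mult. apply (cont_clamp (a j)); auto.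
  apply continuity_pt_minus. apply (cont_clamp (xs k)); auto. apply (cont_clamp (xs (j-1)%nat)); auto.
Qed.

Lemma gfun_ex a xs j k u v : cont01 (a j) -> cont01 (xs k) -> cont01 (xs (j-1)%nat) ->
  ex_RInt (gfun a xs j k) u v.
Proof.
  intros. apply (@ex_RInt_continuous R_CompleteNormedModule). intros. apply continuity_pt_filterlim. apply gfun_cont; auto.
Qed.

Lemma Acoef_val a xs j k xi : I01 xi -> cont01 (a j) -> cont01 (xs k) -> cont01 (xs (j-1)%nat) ->
  Acoef a xs j (node xs k xi) xi = RInt (gfun a xs j k) xi 1.
Proof.
  intros Hxi H1 H2 H3. unfold Acoef. unfold I01 in Hxi.
  set (f := fun z => a j z * (node xs k xi z - node xs (j - 1) xi z)).
  assert (E1 : forall z, Rmin 0 xi < z < Rmax 0 xi -> (fun _ : R => 0) z = f z).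
  { intros z Hz. unfold f. rewrite Rmin_left, Rmax_right in Hz by lra.
    rewrite !node_lt by lra. ring. }
  assert (E2 : forall z, Rmin xi 1 < z < Rmax xi 1 -> gfun a xs j k z = f z).
  { intros z Hz. unfold f, gfun. rewrite Rmin_left, Rmax_right in Hz by lra.
    rewrite clamp_id by (unfold I01; lra). rewrite !node_ge by lra. ring. }
  assert (X1 : ex_RInt f 0 xi) by (eapply ex_RInt_ext; [exact E1| apply ex_RInt_const]).
  assert (X2 : ex_RInt f xi 1) by (eapply ex_RInt_ext; [exact E2| apply gfun_ex; auto]).
  rewrite Rint_RInt by (eapply ex_RInt_Chasles; eauto).
  rewrite <- (RInt_Chasles _ _ _ _ X1 X2).
  rewrite <- (RInt_ext _ _ _ _ E1), <- (RInt_ext _ _ _ _ E2).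
  rewrite RInt_const. unfold scal, plus; simpl; unfold mult, plus; simpl. ring.
Qed.

Lemma deriv_I a xs j k xi : cont01 (a j) -> cont01 (xs k) -> cont01 (xs (j-1)%nat) ->
  derivable_pt_lim (fun t => RInt (gfun a xs j k) t 1) xi (- gfun a xs j k xi).
Proof.
  intros. apply is_derive_Reals.
  apply (is_derive_RInt' (gfun a xs j k) (fun t => RInt (gfun a xs j k) t 1) xi 1).
  apply filter_forall. intros. apply (@RInt_correct R_CompleteNormedModule). apply gfun_ex; auto.
  apply continuity_pt_filterlim. apply gfun_cont; auto.
Qed.

Lemma deriv_within (D : R -> Prop) f g xi l : D xi -> (forall y, D y -> f y = g y) ->
  derivable_pt_lim g xi l -> has_deriv_within D f xi l.
Proof.
  intros Hx Hfg H eps Heps. destruct (H eps Heps) as [d Hd].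
  exists d. split. apply cond_pos. intros h Hh Hhd HD.
  rewrite !Hfg; auto.
Qed.
Lemma cf_app l1 l2 : cf_tail l2 = Some 0 -> cf_tail (l1 ++ l2) = cf_tail l1.
Proof. intros H; induction l1 as [|[c b] l IH]; simpl; [exact H|]. rewrite IH; auto. Qed.

Lemma cf_app_none l1 l2 : cf_tail (l1 ++ l2) <> None -> cf_tail l2 <> None.
Proof.
  induction l1 as [|[c b] l IH]; simpl; auto.
  intros H. apply IH. intros E. rewrite E in H. auto.
Qed.

Lemma cf_cons c b l v : cf_tail ((c,b)::l) = Some v ->
  exists w, cf_tail l = Some w /\ b + w <> 0 /\ v = c / (b + w).
Proof.
  simpl. destruct (cf_tail l) as [w|]; [|discriminate].
  destruct Req_EM_T; [discriminate|]. intros E; injection E; intros; subst. eauto.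
Qed.

Lemma cf_cons_none c b l : cf_tail ((c,b)::l) <> None ->
  exists w, cf_tail l = Some w /\ b + w <> 0 /\ cf_tail ((c,b)::l) = Some (c / (b + w)).
Proof.
  intros H. destruct (cf_tail ((c,b)::l)) eqn:E; [|congruence].
  destruct (cf_cons _ _ _ _ E) as [w [H1 [H2 H3]]]. subst. eauto.
Qed.

Lemma seq_split s n m : (m <= n)%nat -> seq s n = seq s m ++ seq (s + m) (n - m).
Proof. intros. rewrite <- seq_app. f_equal. lia. Qed.

Lemma Q_reduce (A : nat -> R) n k y : (k <= n)%nat -> ((k < n)%nat -> A (S k) = 0) ->
  cf_tail (map (fun j => (A j, 1)) (seq 1 n)) = Some y ->
  cf_tail (map (fun j => (A j, 1)) (seq 1 k)) = Some y.
Proof.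
  intros Hk HA H. rewrite (seq_split 1 n k Hk), map_app in H.
  rewrite cf_app in H; auto.
  assert (Hn := cf_app_none _ _ (ltac:(congruence) : cf_tail (map (fun j => (A j, 1)) (seq 1 k) ++
     map (fun j => (A j, 1)) (seq (1 + k) (n - k))) <> None)).
  destruct (n - k)%nat eqn:E; simpl; auto.
  simpl in Hn. rewrite HA in * by lia.
  destruct (cf_cons_none _ _ _ Hn) as [w [_ [_ H3]]]. simpl in H3. rewrite H3. f_equal.
  unfold Rdiv; ring.
Qed.

Section Inv.
Variable A : nat -> R.
Variable k : nat.
Let h := fun j => (A j, 1).
Definition tt j := match cf_tail (map h (seq j (S k - j))) with Some v => v | None => 0 end.

Hypothesis Hk : (1 <= k)%nat.
Hypothesis Hdef : cf_tail (map h (seq 1 k)) <> None.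

Lemma suff_def j : (1 <= j <= S k)%nat -> cf_tail (map h (seq j (S k - j))) = Some (tt j).
Proof.
  intros Hj. unfold tt.
  assert (E : seq 1 k = seq 1 (j - 1) ++ seq j (S k - j)).
  { rewrite (seq_split 1 k (j - 1)) by lia. f_equal; f_equal; lia. }
  rewrite E, map_app in Hdef. apply cf_app_none in Hdef.
  destruct (cf_tail (map h (seq j (S k - j)))); congruence.
Qed.

Lemma tt_rec j : (1 <= j <= k)%nat -> 1 + tt (S j) <> 0 /\ tt j = A j / (1 + tt (S j)).
Proof.
  intros Hj. pose proof (suff_def j ltac:(lia)) as H.
  replace (S k - j)%nat with (S (S k - S j)) in H by lia. simpl in H.
  fold h in H. destruct (cf_cons _ _ _ _ H) as [w [H1 [H2 H3]]].
  pose proof (suff_def (S j) ltac:(lia)) as H4. replace (S k - S j)%nat with (k - j)%nat in H4 by lia. rewrite H1 in H4. injection H4; intros; subst.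
  auto.
Qed.

Lemma tt_last : tt (S k) = 0.
Proof. unfold tt. rewrite Nat.sub_diag. reflexivity. Qed.

Lemma tt_1 v : cf_tail (map h (seq 1 k)) = Some v -> tt 1 = v.
Proof. intros H. pose proof (suff_def 1 ltac:(lia)). replace (S k - 1)%nat with k in H0 by lia. congruence. Qed.
End Inv.

Lemma cf_invert (A : nat -> R) (v : R) (k : nat) : (2 <= k)%nat ->
  cf_tail (map (fun j => (A j, 1)) (seq 1 k)) = Some v ->
  cf_tail (map (fun j => (A j, if Nat.eqb j 1 then v else -1)) (rev (seq 1 (k-1)))) <> None ->
  cf_tail (map (fun j => (A j, if Nat.eqb j 1 then v else -1)) (rev (seq 1 (k-1)))) = Some (1 + A k).
Proof.
  intros Hk Hv HG.
  assert (Hd : cf_tail (map (fun j => (A j, 1)) (seq 1 k)) <> None) by congruence.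
  pose proof (tt_1 A k ltac:(lia) Hd v Hv) as T1.
  set (g := fun j => (A j, if Nat.eqb j 1 then v else -1)) in *.
  assert (Main : forall m, (1 <= m <= k - 1)%nat -> cf_tail (map g (rev (seq 1 m))) = Some (1 + tt A k (S m))).
  { intros m Hm. induction m as [|m IH]; [lia|].
    assert (Hsuf : cf_tail (map g (rev (seq 1 (S m)))) <> None).
    { rewrite (seq_split 1 (k-1) (S m)) in HG by lia.
      rewrite rev_app_distr, map_app in HG. eapply cf_app_none; eauto. }
    destruct m as [|m].
    - simpl in *. unfold g in *. simpl in *.
      destruct Req_EM_T as [e|e]; [congruence|].
      destruct (tt_rec A k ltac:(lia) Hd 1 ltac:(lia)) as [R1 R2].
      f_equal. rewrite <- T1 in *. rewrite R2 in *. rewrite Rplus_0_r in *.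
      assert (A 1%nat <> 0). { intro Z. rewrite Z in e. apply e. unfold Rdiv; ring. }
      field. split; auto.
    - rewrite seq_S, rev_app_distr, map_app in Hsuf |- *.
      replace (1 + S m)%nat with (S (S m)) in Hsuf |- * by lia.
      simpl app in Hsuf |- *. unfold g in Hsuf |- *. fold g in Hsuf |- *.
      change (rev (seq 2 m) ++ [1%nat]) with (rev (seq 1 (S m))) in Hsuf |- *. cbn [cf_tail] in Hsuf |- *. rewrite IH in Hsuf |- * by lia.
      replace (Nat.eqb (S (S m)) 1) with false in Hsuf |- * by reflexivity.
      destruct Req_EM_T as [e|e]; [congruence|].
      destruct (tt_rec A k ltac:(lia) Hd (S (S m)) ltac:(lia)) as [R1 R2].
      f_equal. rewrite R2 in *.
      assert (A (S (S m)) <> 0). { intro Z. rewrite Z in e. apply e. unfold Rdiv; ring. }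
      set (t := tt A k (S (S (S m)))) in *. replace (-1 + (1 + A (S (S m)) / (1 + t))) with (A (S (S m)) / (1 + t)) by ring. field. split; auto. }
  rewrite Main by lia. replace (S (k - 1)) with k by lia.
  destruct (tt_rec A k ltac:(lia) Hd k ltac:(lia)) as [R1 R2].
  rewrite R2, tt_last. f_equal. field.
Qed.

Theorem theorem1 (n : nat) (xs : nat -> R -> R) (F : (R -> R) -> R)
  (a0 : R) (a : nat -> R -> R)
  (Hn : (1 <= n)%nat)
  (Hxc : forall i, (i <= n)%nat -> cont01 (xs i))
  (Hxne : forall k xi, (1 <= k <= n)%nat -> I01 xi -> xs k xi <> xs (k - 1)%nat xi)
  (HF : gateaux_diff (n - 1) F)
  (Hac : forall j, (1 <= j <= n)%nat -> cont01 (a j))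
  (Hint : forall xi i, I01 xi -> (i <= n)%nat ->
     Qn n a0 a xs (node xs i xi) xi = Some (F (node xs i xi))) :
  a0 = F (xs O) /\
  (forall xi, I01 xi -> exists l,
     has_deriv_within I01 (fun t => F (node xs 1 t)) xi l /\
     a 1%nat xi = -1 / (xs 1%nat xi - xs O xi) * l) /\
  (forall k (J : R -> Prop), (2 <= k <= n)%nat -> rel_open01 J ->
     (forall xi, J xi -> Gk_cf F a xs k xi <> None) ->
     forall xi, J xi -> exists l,
       has_deriv_within J (Gk F a xs k) xi l /\
       a k xi = -1 / (xs k xi - xs (k - 1)%nat xi) * l).
Proof.
  assert (Hkey : forall k xi, (k <= n)%nat -> I01 xi ->
    cf_tail (map (fun j => (Acoef a xs j (node xs k xi) xi, 1)) (seq 1 k)) =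
      Some (F (node xs k xi) - a0)).
  { intros k xi Hk Hxi. pose proof (Hint xi k Hxi Hk) as H. unfold Qn, cfrac in H.
    destruct (cf_tail (map (fun j => (Acoef a xs j (node xs k xi) xi, 1)) (seq 1 n))) as [y|] eqn:E;
      [|discriminate].
    injection H; intros Hy.
    erewrite (Q_reduce (fun j => Acoef a xs j (node xs k xi) xi) n k y Hk); [f_equal; lra| |exact E].
    intros. apply Acoef_zero. lia. }
  assert (Ha0 : a0 = F (xs O)).
  { pose proof (Hkey O 0 ltac:(lia) ltac:(unfold I01; lra)) as H. simpl in H.
    injection H; intros; lra. }
  split; [exact Ha0|]. split.
  - intros xi Hxi. exists (- gfun a xs 1 1 xi). split.
    + apply (deriv_within I01 _ (fun t => a0 + RInt (gfun a xs 1 1) t 1) xi _ Hxi).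
      * intros y Hy. pose proof (Hkey 1%nat y ltac:(lia) Hy) as H. cbn [seq map cf_tail] in H.
        destruct Req_EM_T as [e|e]; [discriminate|]. injection H; intros H'.
        rewrite Rplus_0_r, Rdiv_1_r in H'.
        change (fun z => xs 0%nat z + Heav (z - y) * (xs 1%nat z - xs 0%nat z)) with (node xs 1 y) in H'.
        rewrite <- Acoef_val; auto; try apply Hac; try apply Hxc; try lia. lra.
      * replace (- gfun a xs 1 1 xi) with (0 + - gfun a xs 1 1 xi) by ring.
        apply derivable_pt_lim_plus. apply derivable_pt_lim_const.
        apply deriv_I; try apply Hac; try apply Hxc; lia.
    + unfold gfun. rewrite clamp_id by auto. simpl.
      pose proof (Hxne 1%nat xi ltac:(lia) Hxi). simpl in H. field. lra.
  - intros k J Hk HJ HG xi Hxi. destruct HJ as [HJ1 HJ2].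
    exists (- gfun a xs k k xi). split.
    + apply (deriv_within J _ (fun t => 1 + RInt (gfun a xs k k) t 1) xi _ Hxi).
      * intros y Hy. pose proof (Hkey k y ltac:(lia) (HJ1 y Hy)) as H.
        rewrite Ha0 in H.
        pose proof (cf_invert (fun j => Acoef a xs j (node xs k y) y)
          (F (node xs k y) - F (xs O)) k ltac:(lia) H) as H2.
        specialize (HG y Hy). unfold Gk, Gk_cf in *.
        rewrite H2 by exact HG.
        rewrite Acoef_val; auto; try apply Hac; try apply Hxc; lia.
      * replace (- gfun a xs k k xi) with (0 + - gfun a xs k k xi) by ring.
        apply derivable_pt_lim_plus. apply derivable_pt_lim_const.
        apply deriv_I; try apply Hac; try apply Hxc; lia.
    + unfold gfun. rewrite clamp_id by auto.
      pose proof (Hxne k xi ltac:(lia) (HJ1 xi Hxi)). field. lra.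
Qed.
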